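(* Let $p>1$, $p'=\frac{p}{p-1}$, $\Omega=\{x\in\mathbb{R}^2\;;\;|x|>1\}$, and let $\eta,\eta^*,\psi_R,\psi_R^*,P(R)$ be as in the context. Then there exist positive constants $C_1,C_2,C_3,C_4$ (independent of $R$ and of $(x,t)$) such that for every $R>0$: (i) $\psi_R(x,t)=1$ if $(x,t)\in P(R/2)$, and $\psi_R(x,t)=0$ if $(x,t)\notin P(R)$; (ii) $|\partial_t\psi_R(x,t)|\le C_1R^{-1}[\psi_R^*(x,t)]^{1/p}$ for all $(x,t)\in P(R)$; (iii) $|\partial_t^2\psi_R(x,t)|\le C_2R^{-2}[\psi_R^*(x,t)]^{1/p}$ for all $(x,t)\in P(R)$; (iv) $|\nabla\psi_R(x,t)|\le C_3R^{-1}|x|(\log|x|)[\psi_R^*(x,t)]^{1/p}$ for all $(x,t)\in P(R)$; (v) $|\Delta\psi_R(x,t)|\le C_4R^{-1}[\psi_R^*(x,t)]^{1/p}$ for all $(x,t)\in P(R)$.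
   Context: Fix $\eta\in C^2([0,\infty))$ with $\eta=1$ on $[0,1/2]$, $\eta$ decreasing on $(1/2,1)$, $\eta=0$ on $[1,\infty)$; let $\eta^*(s)=0$ for $s\in[0,1/2)$ and $\eta^*(s)=\eta(s)$ for $s\ge1/2$. For $R>0$ set $s_R(x,t)=\frac{(|x|-1)^2+t}{R}$, $\psi_R(x,t)=[\eta(s_R(x,t))]^{2p'}$, $\psi_R^*(x,t)=[\eta^*(s_R(x,t))]^{2p'}$ for $(x,t)\in\Omega\times[0,\infty)$, and $P(R)=\{(x,t)\in\Omega\times[0,\infty)\;;\;(|x|-1)^2+t\le R\}$. *)

(* Defs.v *)
From Stdlib Require Import Reals.
From Coquelicot Require Import Coquelicot.
Open Scope R_scope.

(* Real power a^b for a >= 0 (with 0^b = 0, as appropriate for b > 0). *)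
Definition rpow (a b : R) : R := if Rlt_dec 0 a then Rpower a b else 0.

Definition pconj (p : R) : R := p / (p - 1).

Definition normx (x1 x2 : R) : R := sqrt (x1 ^ 2 + x2 ^ 2).

Definition inOmega (x1 x2 : R) : Prop := 1 < normx x1 x2.

Definition sR (R0 x1 x2 t : R) : R := ((normx x1 x2 - 1) ^ 2 + t) / R0.

Definition eta_star (eta : R -> R) (s : R) : R :=
  if Rlt_dec s (1/2) then 0 else eta s.

Definition psi (p : R) (eta : R -> R) (R0 x1 x2 t : R) : R :=
  rpow (eta (sR R0 x1 x2 t)) (2 * pconj p).
Definition psi_star (p : R) (eta : R -> R) (R0 x1 x2 t : R) : R :=
  rpow (eta_star eta (sR R0 x1 x2 t)) (2 * pconj p).

Definition inP (R0 x1 x2 t : R) : Prop :=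
  inOmega x1 x2 /\ 0 <= t /\ (normx x1 x2 - 1) ^ 2 + t <= R0.

Definition d_t (f : R -> R -> R -> R) (x1 x2 t : R) : R :=
  Derive (fun s => f x1 x2 s) t.
Definition d_x1 (f : R -> R -> R -> R) (x1 x2 t : R) : R :=
  Derive (fun y => f y x2 t) x1.
Definition d_x2 (f : R -> R -> R -> R) (x1 x2 t : R) : R :=
  Derive (fun y => f x1 y t) x2.
Definition d_tt (f : R -> R -> R -> R) (x1 x2 t : R) : R := d_t (d_t f) x1 x2 t.
Definition grad_norm (f : R -> R -> R -> R) (x1 x2 t : R) : R :=
  sqrt (d_x1 f x1 x2 t ^ 2 + d_x2 f x1 x2 t ^ 2).
Definition laplacian (f : R -> R -> R -> R) (x1 x2 t : R) : R :=
  d_x1 (d_x1 f) x1 x2 t + d_x2 (d_x2 f) x1 x2 t.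

(* eta in C^2([0,oo)): we require C^2 on (0,oo); since eta = 1 on [0,1/2]
   this is equivalent to C^2 on [0,oo) (one-sided at 0). *)
Definition C2_pos (eta : R -> R) : Prop :=
  forall s, 0 < s ->
    ex_derive eta s /\ ex_derive (Derive eta) s /\
    continuity_pt (Derive (Derive eta)) s.

Definition cutoff (eta : R -> R) : Prop :=
  C2_pos eta /\
  (forall s, 0 <= s <= 1/2 -> eta s = 1) /\
  (forall a b, 1/2 < a -> a < b -> b < 1 -> eta b <= eta a) /\
  (forall s, 1 <= s -> eta s = 0).

(* Main.v *)
Require Import Defs.
From Stdlib Require Import Reals Lra.
From Coquelicot Require Import Coquelicot.
Open Scope R_scope.

Lemma rpow_nonneg a b : 0 <= rpow a b.
Proof. unfold rpow; destruct (Rlt_dec 0 a); [left; apply exp_pos|lra]. Qed.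

Lemma rpow_deriv r a : 1 < r -> is_derive (fun a => rpow a r) a (r * rpow a (r-1)).
Proof.
  intros Hr.
  destruct (Rlt_le_dec 0 a) as [Ha|Ha].
  - apply is_derive_ext_loc with (fun x => Rpower x r).
    + exists (mkposreal a Ha). intros z Hz. cbn in Hz. unfold ball in Hz; cbn in Hz.
      unfold AbsRing_ball, abs, minus, plus, opp in Hz; cbn in Hz.
      unfold rpow. destruct (Rlt_dec 0 z); auto. exfalso. apply Rabs_def2 in Hz. lra.
    + unfold rpow. destruct (Rlt_dec 0 a); [|lra].
      apply is_derive_Reals. apply derivable_pt_lim_power; auto.
  - destruct Ha as [Ha|Ha].
    + apply is_derive_ext_loc with (fun _ => 0).
      * exists (mkposreal (-a) ltac:(lra)). intros z Hz. unfold ball in Hz; cbn in Hz.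
        unfold AbsRing_ball, abs, minus, plus, opp in Hz; cbn in Hz.
        unfold rpow. destruct (Rlt_dec 0 z); auto. exfalso. apply Rabs_def2 in Hz. lra.
      * replace (rpow a (r-1)) with 0 by (unfold rpow; destruct (Rlt_dec 0 a); lra).
        replace (r*0) with 0 by ring. apply (is_derive_const (K:=R_AbsRing) (0:R)).
    + subst a. apply is_derive_Reals.
      replace (rpow 0 (r-1)) with 0 by (unfold rpow; destruct (Rlt_dec 0 0); lra). rewrite Rmult_0_r.
      intros eps Heps.
      exists (mkposreal (exp (ln eps / (r-1))) (exp_pos _)). intros h Hh0 Hh. cbn in Hh.
      rewrite Rplus_0_l. replace (rpow 0 r) with 0 by (unfold rpow; destruct (Rlt_dec 0 0); lra).
      unfold rpow. destruct (Rlt_dec 0 h) as [Hp|Hp].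
      * replace ((Rpower h r - 0)/h - 0) with (Rpower h (r-1)).
        2:{ replace r with ((r-1)+1) at 2 by ring. rewrite Rpower_plus, Rpower_1 by lra. field. lra. }
        rewrite Rabs_pos_eq by (left; apply exp_pos).
        unfold Rpower. rewrite <- (exp_ln eps) by lra. apply exp_increasing.
        rewrite Rabs_pos_eq in Hh by lra.
        apply ln_increasing in Hh; auto. rewrite ln_exp in Hh.
        apply Rmult_lt_compat_l with (r := r-1) in Hh; [|lra].
        replace ((r-1)*(ln eps/(r-1))) with (ln eps) in Hh by (field; lra). lra.
      * replace ((0-0)/h-0) with 0 by (field; auto). rewrite Rabs_R0; lra.
Qed.

Definition G q (eta : R -> R) s := rpow (eta s) q.
Definition G1 q (eta : R -> R) s := q * rpow (eta s) (q-1) * Derive eta s.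
Definition G2 q (eta : R -> R) s :=
  q*(q-1)*rpow (eta s) (q-2) * (Derive eta s)^2 + q*rpow (eta s) (q-1) * Derive (Derive eta) s.

Lemma G_deriv q eta s : 2 < q -> C2_pos eta -> 0 < s ->
  is_derive (G q eta) s (G1 q eta s) /\ is_derive (G1 q eta) s (G2 q eta s).
Proof.
  intros Hq Hc Hs. destruct (Hc s Hs) as [He1 [He2 _]].
  split.
  - pose proof (is_derive_comp (fun a => rpow a q) eta s _ _ (rpow_deriv q (eta s) ltac:(lra)) (Derive_correct _ _ He1)) as H.
    replace (G1 q eta s) with (scal (Derive eta s) (q * rpow (eta s) (q-1))); [exact H|].
    unfold G1, scal; simpl; unfold mult; simpl; ring.
  - pose proof (is_derive_comp (fun a => rpow a (q-1)) eta s _ _ (rpow_deriv (q-1) (eta s) ltac:(lra)) (Derive_correct _ _ He1)) as H1.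
    pose proof (is_derive_scal _ _ q _ H1) as H2.
    pose proof (is_derive_mult _ _ _ _ _ H2 (Derive_correct _ _ He2) ltac:(intros; apply Rmult_comm)) as H3.
    unfold G1. replace (G2 q eta s) with
      (plus (mult (q * scal (Derive eta s) ((q - 1) * rpow (eta s) (q - 1 - 1))) (Derive eta s))
         (mult (q * rpow (eta s) (q - 1)) (Derive (Derive eta) s))).
    + exact H3.
    + unfold G2, scal, plus, mult; simpl; unfold mult, plus; simpl.
      replace (q-1-1) with (q-2) by ring. ring.
Qed.

Definition Bf q eta s := rpow (eta_star eta s) (q-2).

Lemma cont_bound f : (forall c, 1/2 <= c <= 1 -> continuity_pt f c) ->
  exists M, 0 <= M /\ forall c, 1/2 <= c <= 1 -> Rabs (f c) <= M.
Proof.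
  intros Hf. destruct (continuity_ab_maj (fun x => Rabs (f x)) (1/2) 1 ltac:(lra)) as [Mx [HM _]].
  - intros c Hc. apply (continuity_pt_comp f Rabs). auto. apply Rcontinuity_abs.
  - exists (Rabs (f Mx)). split; [apply Rabs_pos|]. auto.
Qed.

Lemma ball_R (x : R) (e : posreal) z : Rabs (z - x) < e -> ball x e z.
Proof. intros H. exact H. Qed.

Lemma deta0 eta s : cutoff eta -> 0 < s < 1/2 -> Derive eta s = 0.
Proof.
  intros [_ [H1 _]] Hs.
  rewrite (Derive_ext_loc eta (fun _ => 1)). apply Derive_const.
  exists (mkposreal (Rmin s (1/2 - s)) ltac:(apply Rmin_glb_lt; lra)).
  intros z Hz. change (Rabs (z - s) < Rmin s (1/2 - s)) in Hz.
  apply Rabs_def2 in Hz. destruct Hz. pose proof (Rmin_l s (1/2-s)). pose proof (Rmin_r s (1/2-s)).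
  apply H1; lra.
Qed.

Lemma deta0' eta s : cutoff eta -> 0 < s < 1/2 -> Derive (Derive eta) s = 0.
Proof.
  intros Hc Hs.
  rewrite (Derive_ext_loc (Derive eta) (fun _ => 0)). apply Derive_const.
  exists (mkposreal (Rmin s (1/2 - s)) ltac:(apply Rmin_glb_lt; lra)).
  intros z Hz. change (Rabs (z - s) < Rmin s (1/2 - s)) in Hz.
  apply Rabs_def2 in Hz. destruct Hz. pose proof (Rmin_l s (1/2-s)). pose proof (Rmin_r s (1/2-s)).
  apply deta0; auto; lra.
Qed.

Lemma G_bounds q eta : 2 < q -> cutoff eta -> exists K, 0 < K /\
  forall s, 0 < s -> s <= 1 -> Rabs (G1 q eta s) <= K * Bf q eta s /\ Rabs (G2 q eta s) <= K * Bf q eta s.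
Proof.
  intros Hq Hc. pose proof Hc as [HC2 _].
  assert (Hcont : forall c, 0 < c -> continuity_pt eta c /\ continuity_pt (Derive eta) c
     /\ continuity_pt (Derive (Derive eta)) c).
  { intros c Hc0. destruct (HC2 c Hc0) as [E1 [E2 E3]]. split; [|split]; auto;
    apply continuity_pt_filterlim; apply (ex_derive_continuous (K:=R_AbsRing) (V:=R_NormedModule)); auto. }
  destruct (cont_bound eta) as [M0 [HM0 B0]]. { intros c Hc0; apply Hcont; lra. }
  destruct (cont_bound (Derive eta)) as [M1 [HM1 B1]]. { intros c Hc0; apply Hcont; lra. }
  destruct (cont_bound (Derive (Derive eta))) as [M2 [HM2 B2]]. { intros c Hc0; apply Hcont; lra. }
  set (K := q*M0*M1 + q*(q-1)*M1^2 + q*M0*M2 + 1).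
  assert (HK0 : 0 <= q*M0*M1) by (repeat apply Rmult_le_pos; lra).
  assert (HK1 : 0 <= q*(q-1)*M1^2) by (repeat apply Rmult_le_pos; try lra; apply pow2_ge_0).
  assert (HK2 : 0 <= q*M0*M2) by (repeat apply Rmult_le_pos; lra).
  exists K. split; [unfold K; lra|].
  intros s Hs0 Hs1.
  pose proof (rpow_nonneg (eta_star eta s) (q-2)) as Hb.
  destruct (Rlt_le_dec s (1/2)) as [Hlt|Hge].
  - unfold G1, G2. rewrite deta0, deta0' by (auto; lra).
    replace (q * (q - 1) * rpow (eta s) (q - 2) * 0 ^ 2 + q * rpow (eta s) (q - 1) * 0) with 0 by ring.
    replace (q * rpow (eta s) (q - 1) * 0) with 0 by ring.
    rewrite Rabs_R0. unfold Bf. split; apply Rmult_le_pos; unfold K in *; lra.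
  - unfold Bf in *. unfold eta_star in *. destruct (Rlt_dec s (1/2)); [lra|].
    set (b := rpow (eta s) (q-2)) in *.
    destruct (Rlt_le_dec 0 (eta s)) as [Hp|Hn].
    + assert (E : rpow (eta s) (q-1) = eta s * b).
      { unfold b, rpow. destruct (Rlt_dec 0 (eta s)); [|lra].
        replace (q-1) with ((q-2)+1) by ring. rewrite Rpower_plus, Rpower_1 by lra. ring. }
      unfold G1, G2. fold b. rewrite E.
      specialize (B0 s ltac:(lra)). specialize (B1 s ltac:(lra)). specialize (B2 s ltac:(lra)).
      rewrite Rabs_pos_eq in B0 by lra.
      set (d1 := Derive eta s) in *. set (d2 := Derive (Derive eta) s) in *.
      set (e := eta s) in *.
      assert (Hd1 : d1^2 <= M1^2).
      { rewrite <- (pow2_abs d1). apply pow_incr. split; [apply Rabs_pos|auto]. }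
      split.
      * replace (q*(e*b)*d1) with ((q*e*b)*d1) by ring.
        rewrite Rabs_mult, (Rabs_pos_eq (q*e*b)) by (repeat apply Rmult_le_pos; lra).
        apply Rle_trans with ((q*e*b)*M1). apply Rmult_le_compat_l; auto. repeat apply Rmult_le_pos; lra.
        apply Rle_trans with ((q*M0*M1)*b).
        replace (q*e*b*M1) with ((q*M1*b)*e) by ring. replace (q*M0*M1*b) with ((q*M1*b)*M0) by ring.
        apply Rmult_le_compat_l; [repeat apply Rmult_le_pos; lra|lra].
        apply Rmult_le_compat_r; [lra|unfold K; lra].
      * eapply Rle_trans; [apply Rabs_triang|].
        rewrite Rabs_mult, (Rabs_pos_eq (q*(q-1)*b)) by (repeat apply Rmult_le_pos; lra).
        rewrite Rabs_mult, (Rabs_pos_eq (q*(e*b))) by (repeat apply Rmult_le_pos; lra).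
        rewrite Rabs_pos_eq by apply pow2_ge_0.
        apply Rle_trans with ((q*(q-1)*M1^2)*b + (q*M0*M2)*b).
        apply Rplus_le_compat.
        -- replace (q*(q-1)*M1^2*b) with ((q*(q-1)*b)*M1^2) by ring.
           apply Rmult_le_compat_l; [repeat apply Rmult_le_pos; lra|lra].
        -- apply Rle_trans with (q*(e*b)*M2). apply Rmult_le_compat_l; [repeat apply Rmult_le_pos; lra|lra].
           replace (q*(e*b)*M2) with ((q*M2*b)*e) by ring. replace (q*M0*M2*b) with ((q*M2*b)*M0) by ring.
           apply Rmult_le_compat_l; [repeat apply Rmult_le_pos; lra|lra].
        -- rewrite <- Rmult_plus_distr_r. apply Rmult_le_compat_r; [lra|unfold K; lra].
    + assert (Z : forall r, rpow (eta s) r = 0).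
      { intros r. unfold rpow. destruct (Rlt_dec 0 (eta s)); lra. }
      unfold G1, G2. rewrite !Z.
      replace (q * 0 * Derive eta s) with 0 by ring.
      replace (q * (q - 1) * 0 * Derive eta s ^ 2 + q * 0 * Derive (Derive eta) s) with 0 by ring.
      rewrite Rabs_R0. split; apply Rmult_le_pos; unfold K in *; lra.
Qed.

Lemma chain2 q eta u du ddu (P : R -> Prop) y :
 2 < q -> C2_pos eta ->
 (forall z, P z -> locally z P) ->
 (forall z, P z -> 0 < u z /\ is_derive u z (du z) /\ is_derive du z (ddu z)) ->
 P y ->
 Derive (fun z => G q eta (u z)) y = G1 q eta (u y) * du y /\
 Derive (fun z => Derive (fun w => G q eta (u w)) z) y
   = G2 q eta (u y) * (du y)^2 + G1 q eta (u y) * ddu y.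
Proof.
  intros Hq Hc HP Hu Hy.
  assert (D1 : forall z, P z -> Derive (fun z => G q eta (u z)) z = G1 q eta (u z) * du z).
  { intros z Hz. destruct (Hu z Hz) as [H0 [H1 _]].
    apply is_derive_unique.
    pose proof (is_derive_comp (G q eta) u z _ _ (proj1 (G_deriv q eta (u z) Hq Hc H0)) H1) as H.
    replace (G1 q eta (u z) * du z) with (scal (du z) (G1 q eta (u z))); [exact H|].
    unfold scal; simpl; unfold mult; simpl; ring. }
  split; [auto|].
  rewrite (Derive_ext_loc _ (fun z => G1 q eta (u z) * du z)).
  - apply is_derive_unique. destruct (Hu y Hy) as [H0 [H1 H2]].
    pose proof (is_derive_comp (G1 q eta) u y _ _ (proj2 (G_deriv q eta (u y) Hq Hc H0)) H1) as H.
    pose proof (is_derive_mult _ _ _ _ _ H H2 ltac:(intros; apply Rmult_comm)) as H3.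
    replace (G2 q eta (u y) * du y ^ 2 + G1 q eta (u y) * ddu y) with
      (plus (mult (scal (du y) (G2 q eta (u y))) (du y)) (mult (G1 q eta (u y)) (ddu y))).
    exact H3. unfold plus, mult, scal; simpl; unfold plus, mult; simpl; ring.
  - apply filter_imp with P; auto.
Qed.

Lemma locally_gt (f : R -> R) y c : continuous f y -> c < f y -> locally y (fun z => c < f z).
Proof.
  intros Hf Hy. apply (proj1 (filterlim_locally f (f y))) with (eps := mkposreal (f y - c) ltac:(lra)) in Hf.
  apply filter_imp with (2 := Hf). intros z Hz. change (Rabs (f z - f y) < f y - c) in Hz.
  apply Rabs_def2 in Hz. lra.
Qed.

Lemma sqrt_gt1 a : 1 < sqrt a -> 1 < a.
Proof. intros H. destruct (Rlt_le_dec 1 a); auto. apply sqrt_le_1_alt in r. rewrite sqrt_1 in r. lra. Qed.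

Lemma dx1 c t R0 z : 0 < R0 -> 1 < normx z c ->
  is_derive (fun y => sR R0 y c t) z (2*(z - z/normx z c)/R0) /\
  is_derive (fun y => 2*(y - y/normx y c)/R0) z (2*(1 - 1/normx z c + z^2/(normx z c*(z^2+c^2)))/R0).
Proof.
  intros HR H. unfold normx in *. pose proof (sqrt_gt1 _ H) as H1.
  assert (Hs : sqrt (z^2+c^2) * sqrt (z^2+c^2) = z^2+c^2) by (apply sqrt_sqrt; lra).
  unfold sR, normx. split.
  - auto_derive. lra. replace (z*(z*1)+c*(c*1)) with (z^2+c^2) by ring. field. lra.
  - auto_derive. replace (z*(z*1)+c*(c*1)) with (z^2+c^2) by ring. repeat split; lra.
    replace (z*(z*1)+c*(c*1)) with (z^2+c^2) by ring. rewrite Hs. field. lra.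
Qed.

Lemma dx2 c t R0 z : 0 < R0 -> 1 < normx c z ->
  is_derive (fun y => sR R0 c y t) z (2*(z - z/normx c z)/R0) /\
  is_derive (fun y => 2*(y - y/normx c y)/R0) z (2*(1 - 1/normx c z + z^2/(normx c z*(c^2+z^2)))/R0).
Proof.
  intros HR H. unfold normx in *. pose proof (sqrt_gt1 _ H) as H1.
  assert (Hs : sqrt (c^2+z^2) * sqrt (c^2+z^2) = c^2+z^2) by (apply sqrt_sqrt; lra).
  unfold sR, normx. split.
  - auto_derive. lra. replace (c*(c*1)+z*(z*1)) with (c^2+z^2) by ring. field. lra.
  - auto_derive. replace (c*(c*1)+z*(z*1)) with (c^2+z^2) by ring. repeat split; lra.
    replace (c*(c*1)+z*(z*1)) with (c^2+z^2) by ring. rewrite Hs. field. lra.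
Qed.

Lemma normx_cont1 c z : 1 < normx z c -> continuous (fun y => normx y c) z.
Proof.
  intros H. apply (ex_derive_continuous (K:=R_AbsRing) (V:=R_NormedModule)).
  unfold normx in *. pose proof (sqrt_gt1 _ H). auto_derive. lra.
Qed.
Lemma normx_cont2 c z : 1 < normx c z -> continuous (fun y => normx c y) z.
Proof.
  intros H. apply (ex_derive_continuous (K:=R_AbsRing) (V:=R_NormedModule)).
  unfold normx in *. pose proof (sqrt_gt1 _ H). auto_derive. lra.
Qed.

Lemma rpow_rpow a p : 1 < p ->
  rpow (rpow a (2 * pconj p)) (1/p) = rpow a (2 * pconj p - 2).
Proof.
  intros Hp. unfold rpow at 2. unfold rpow at 2. destruct (Rlt_dec 0 a).
  - unfold rpow. destruct (Rlt_dec 0 (Rpower a (2 * pconj p))) as [_|n]; [|exfalso; apply n, exp_pos].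
    rewrite Rpower_mult. f_equal. unfold pconj. field. lra.
  - unfold rpow. destruct (Rlt_dec 0 0); lra.
Qed.

Lemma ln_ineq r : 1 < r -> r - 1 <= r * ln r.
Proof.
  intros H. pose proof (exp_ineq1_le (- ln r)) as E.
  rewrite exp_Ropp, exp_ln in E by lra.
  assert (1 - ln r <= / r) by lra.
  apply Rmult_le_compat_l with (r := r) in H0; [|lra].
  rewrite Rinv_r in H0 by lra. lra.
Qed.

Lemma div_le X a R0 : 0 < R0 -> X <= a * R0 -> X / R0 <= a.
Proof. intros H H1. unfold Rdiv. apply Rle_trans with (a*R0*/R0).
  apply Rmult_le_compat_r; [left; apply Rinv_0_lt_compat; lra|lra]. right; field; lra. Qed.
Lemma div_gt X a R0 : 0 < R0 -> a * R0 < X -> a < X / R0.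
Proof. intros H H1. unfold Rdiv. apply Rle_lt_trans with (a*R0*/R0).
  right; field; lra. apply Rmult_lt_compat_r; [apply Rinv_0_lt_compat; lra|lra]. Qed.

Theorem lemma2p2 (p : R) (eta : R -> R) :
  1 < p -> cutoff eta ->
  exists C1 C2 C3 C4 : R, 0 < C1 /\ 0 < C2 /\ 0 < C3 /\ 0 < C4 /\
  forall R0 : R, 0 < R0 ->
    (* (i) *)
    (forall x1 x2 t, inOmega x1 x2 -> 0 <= t ->
       (inP (R0 / 2) x1 x2 t -> psi p eta R0 x1 x2 t = 1) /\
       (~ inP R0 x1 x2 t -> psi p eta R0 x1 x2 t = 0)) /\
    (forall x1 x2 t, inP R0 x1 x2 t ->
       (* (ii) *)
       Rabs (d_t (psi p eta R0) x1 x2 t)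
         <= C1 / R0 * rpow (psi_star p eta R0 x1 x2 t) (1 / p) /\
       (* (iii) *)
       Rabs (d_tt (psi p eta R0) x1 x2 t)
         <= C2 / R0 ^ 2 * rpow (psi_star p eta R0 x1 x2 t) (1 / p) /\
       (* (iv) *)
       grad_norm (psi p eta R0) x1 x2 t
         <= C3 / R0 * normx x1 x2 * ln (normx x1 x2)
              * rpow (psi_star p eta R0 x1 x2 t) (1 / p) /\
       (* (v) *)
       Rabs (laplacian (psi p eta R0) x1 x2 t)
         <= C4 / R0 * rpow (psi_star p eta R0 x1 x2 t) (1 / p)).
Proof.
  intros Hp Hcut.
  assert (Hq : 2 < 2 * pconj p).
  { unfold pconj. assert (E : 2 * (p/(p-1)) - 2 = 2/(p-1)) by (field; lra).
    assert (0 < 2/(p-1)) by (apply Rdiv_lt_0_compat; lra). lra. }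
  pose proof Hcut as [HC2 [Heta1 [_ Heta0]]].
  destruct (G_bounds _ eta Hq Hcut) as [K [HK HB]].
  exists K, K, (2*K), (8*K). split; [lra|split; [lra|split; [lra|split; [lra|]]]].
  intros R0 HR. split.
  - intros x1 x2 t Hom Ht. split.
    + intros [_ [_ H]]. unfold psi. rewrite Heta1.
      * unfold rpow. destruct (Rlt_dec 0 1); [|lra]. unfold Rpower. rewrite ln_1, Rmult_0_r, exp_0; auto.
      * unfold sR. split.
        -- apply Rmult_le_pos; [|left; apply Rinv_0_lt_compat; lra].
           pose proof (pow2_ge_0 (normx x1 x2 - 1)); lra.
        -- apply div_le; lra.
    + intros HnP. assert (HX : R0 < (normx x1 x2 - 1)^2 + t).
      { destruct (Rlt_le_dec R0 ((normx x1 x2 - 1)^2 + t)); auto. exfalso; apply HnP. split; auto. }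
      unfold psi. rewrite Heta0.
      * unfold rpow. destruct (Rlt_dec 0 0); lra.
      * left. apply div_gt; lra.
  - intros x1 x2 t [Hom [Ht HR']].
    unfold inOmega in Hom.
    assert (Hsq : 0 < (normx x1 x2 - 1)^2) by (apply pow_lt; lra).
    assert (Hs0 : 0 < sR R0 x1 x2 t).
    { unfold sR. apply Rdiv_lt_0_compat; lra. }
    assert (Hs1 : sR R0 x1 x2 t <= 1) by (unfold sR; apply div_le; lra).
    destruct (HB _ Hs0 Hs1) as [B1 B2].
    unfold psi_star. rewrite rpow_rpow by auto.
    change (rpow (eta_star eta (sR R0 x1 x2 t)) (2 * pconj p - 2)) with (Bf (2*pconj p) eta (sR R0 x1 x2 t)).
    assert (Hb : 0 <= Bf (2*pconj p) eta (sR R0 x1 x2 t)) by apply rpow_nonneg.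
    destruct (chain2 (2*pconj p) eta (fun t' => sR R0 x1 x2 t') (fun _ => /R0) (fun _ => 0)
       (fun t' => 0 < (normx x1 x2 - 1)^2 + t') t Hq HC2) as [Dt Dtt].
    { intros z Hz. apply locally_gt with (f := fun t' => (normx x1 x2 - 1)^2 + t'); auto.
      apply (ex_derive_continuous (K:=R_AbsRing) (V:=R_NormedModule)). auto_derive; trivial. }
    { intros z Hz. split; [unfold sR; apply Rdiv_lt_0_compat; lra|]. split.
      - unfold sR. auto_derive; trivial. field. lra.
      - apply (is_derive_const (K:=R_AbsRing) (/R0)). }
    { cbv beta; lra. }
    cbv beta in Dt, Dtt. unfold G in Dt, Dtt.
    destruct (chain2 (2*pconj p) eta (fun y => sR R0 y x2 t) (fun y => 2*(y - y/normx y x2)/R0)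
       (fun y => 2*(1 - 1/normx y x2 + y^2/(normx y x2*(y^2+x2^2)))/R0)
       (fun y => 1 < normx y x2) x1 Hq HC2) as [Dx1 Dxx1].
    { intros z Hz. apply locally_gt with (f := fun y => normx y x2); auto. apply normx_cont1; auto. }
    { intros z Hz. split.
      - unfold sR. apply Rdiv_lt_0_compat; [|lra]. assert (0 < (normx z x2 - 1)^2) by (apply pow_lt; lra). lra.
      - apply dx1; auto. }
    { cbv beta; lra. }
    cbv beta in Dx1, Dxx1. unfold G in Dx1, Dxx1.
    destruct (chain2 (2*pconj p) eta (fun y => sR R0 x1 y t) (fun y => 2*(y - y/normx x1 y)/R0)
       (fun y => 2*(1 - 1/normx x1 y + y^2/(normx x1 y*(x1^2+y^2)))/R0)
       (fun y => 1 < normx x1 y) x2 Hq HC2) as [Dx2 Dxx2].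
    { intros z Hz. apply locally_gt with (f := fun y => normx x1 y); auto. apply normx_cont2; auto. }
    { intros z Hz. split.
      - unfold sR. apply Rdiv_lt_0_compat; [|lra]. assert (0 < (normx x1 z - 1)^2) by (apply pow_lt; lra). lra.
      - apply dx2; auto. }
    { cbv beta; lra. }
    cbv beta in Dx2, Dxx2. unfold G in Dx2, Dxx2.
    set (b := Bf (2 * pconj p) eta (sR R0 x1 x2 t)) in *.
    set (g1 := G1 (2 * pconj p) eta (sR R0 x1 x2 t)) in *.
    set (g2 := G2 (2 * pconj p) eta (sR R0 x1 x2 t)) in *.
    assert (HiR : 0 < / R0) by (apply Rinv_0_lt_compat; lra).
    split; [|split; [|split]].
    + unfold d_t, psi. rewrite Dt. rewrite Rabs_mult, (Rabs_pos_eq (/R0)) by lra.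
      replace (K / R0 * b) with ((K * b) * /R0) by (field; lra).
      apply Rmult_le_compat_r; lra.
    + unfold d_tt, d_t, psi. rewrite Dtt. rewrite Rmult_0_r, Rplus_0_r.
      rewrite Rabs_mult, (Rabs_pos_eq ((/R0)^2)) by (apply pow2_ge_0).
      replace (K / R0 ^ 2 * b) with ((K * b) * (/R0)^2) by (field; lra).
      apply Rmult_le_compat_r; [apply pow2_ge_0|lra].
    + unfold grad_norm, d_x1, d_x2, psi. rewrite Dx1, Dx2.
      assert (Hrho : normx x1 x2 * normx x1 x2 = x1^2+x2^2).
      { unfold normx; apply sqrt_sqrt. pose proof (pow2_ge_0 x1); pose proof (pow2_ge_0 x2); lra. }
      pose proof (ln_ineq _ Hom) as Hln.
      set (rho := normx x1 x2) in *.
      assert (Hx : 0 < x1^2+x2^2) by nra.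
      replace ((g1 * (2*(x1 - x1/rho)/R0))^2 + (g1*(2*(x2 - x2/rho)/R0))^2) with ((Rabs g1 * (2*(rho-1)/R0))^2).
      2: { rewrite Rpow_mult_distr, pow2_abs.
           replace ((g1 * (2*(x1 - x1/rho)/R0))^2 + (g1*(2*(x2 - x2/rho)/R0))^2)
             with (g1^2*4*(x1^2+x2^2)*((rho-1)/rho)^2/R0^2) by (field; lra).
           rewrite <- Hrho. field. lra. }
      assert (H2 : 0 <= 2*(rho-1)/R0) by (apply Rmult_le_pos; lra).
      rewrite sqrt_pow2 by (apply Rmult_le_pos; [apply Rabs_pos|lra]).
      apply Rle_trans with ((K*b) * (2*(rho*ln rho)/R0)).
      * apply Rmult_le_compat; auto. apply Rabs_pos.
        unfold Rdiv. apply Rmult_le_compat_r; lra.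
      * right. field. lra.
    + unfold laplacian, d_x1, d_x2, psi. rewrite Dxx1, Dxx2.
      assert (Hrho : normx x1 x2 * normx x1 x2 = x1^2+x2^2).
      { unfold normx; apply sqrt_sqrt. pose proof (pow2_ge_0 x1); pose proof (pow2_ge_0 x2); lra. }
      set (rho := normx x1 x2) in *.
      assert (Hx : 0 < x1^2+x2^2) by nra.
      assert (Hirho : 0 < /rho < 1). { split. apply Rinv_0_lt_compat; lra. rewrite <- Rinv_1. apply Rinv_lt_contravar; lra. }
      match goal with |- Rabs ?X <= _ =>
        replace X with (g2*(4*(x1^2+x2^2)*((rho-1)/rho)^2/R0^2) + g1*(2*(2-1/rho)/R0)) by (field; lra) end.
      rewrite <- Hrho.
      replace (4*(rho*rho)*((rho-1)/rho)^2/R0^2) with (4*(rho-1)^2/R0^2) by (field; lra).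
      assert (HA : 0 <= 4*(rho-1)^2/R0^2 <= 4/R0).
      { split. apply Rmult_le_pos; [pose proof (pow2_ge_0 (rho-1)); lra|left; apply Rinv_0_lt_compat, pow_lt; lra].
        replace (4*(rho-1)^2/R0^2) with ((4*(rho-1)^2/R0)*/R0) by (field; lra).
        replace (4/R0) with ((4*R0/R0)*/R0) by (field; lra).
        apply Rmult_le_compat_r; [lra|]. unfold Rdiv. apply Rmult_le_compat_r; lra. }
      assert (HBc : 0 <= 2*(2-1/rho)/R0 <= 4/R0).
      { unfold Rdiv. rewrite Rmult_1_l. split. apply Rmult_le_pos; lra.
        apply Rmult_le_compat_r; lra. }
      eapply Rle_trans; [apply Rabs_triang|].
      rewrite !Rabs_mult, (Rabs_pos_eq (4*(rho-1)^2/R0^2)), (Rabs_pos_eq (2*(2-1/rho)/R0)) by lra.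
      apply Rle_trans with ((K*b)*(4/R0) + (K*b)*(4/R0)).
      * apply Rplus_le_compat; apply Rmult_le_compat; try lra; apply Rabs_pos.
      * right. field. lra.
Qed.
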